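(* Let $J$ be a locally profinite group and $J^1$ a compact normal subgroup. Let $A$ be a finite length local $W(\overline{\mathbb{F}}_l)$-algebra with residue field $\overline{\mathbb{F}}_l$, and let $\eta_A$ be a finite-dimensional representation of $J^1$ over $A$ such that $\eta_A\otimes_A\overline{\mathbb{F}}_l$ is irreducible. Suppose $\eta_A$ extends to an $A$-representation $\Lambda_A$ of $J$. Then any other extension $\Lambda'_A$ of $\eta_A$ to a representation of $J$ is isomorphic to the twist of $\Lambda_A$ by a character of $J/J^1$ (with values in $A^\times$). *)

(* Defs.v *)
From HB Require Import structures.
From mathcomp Require Import all_boot all_order all_algebra.
From mathcomp Require Import all_classical all_reals all_analysis.
Set Implicit Arguments. Unset Strict Implicit. Unset Printing Implicit Defensive.
Import Order.TTheory GRing.Theory Num.Theory.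
Local Open Scope classical_set_scope.
Local Open Scope ring_scope.

Section TopGroups.
Variables (T : topologicalType) (mul : T -> T -> T) (inv : T -> T) (one : T).

Definition is_group : Prop :=
  [/\ forall x y z, mul x (mul y z) = mul (mul x y) z,
      forall x, mul one x = x /\ mul x one = x &
      forall x, mul (inv x) x = one /\ mul x (inv x) = one].

Definition is_subgroup (H : set T) : Prop :=
  [/\ H one, forall x y, H x -> H y -> H (mul x y) & forall x, H x -> H (inv x)].

Definition is_normal_subgroup (H : set T) : Prop :=
  is_subgroup H /\ forall g h, H h -> H (mul (mul g h) (inv g)).

Definition locally_profinite_group : Prop :=
  [/\ is_group,
      continuous (fun p : T * T => mul p.1 p.2),
      continuous inv,
      hausdorff_space T &
      forall U : set T, nbhs one U ->
        exists K : set T, [/\ K `<=` U, is_subgroup K, open K & compact K]].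

Definition is_rep_on (A : pzRingType) (n : nat) (H : set T) (rho : T -> 'M[A]_n)
  : Prop :=
  rho one = 1%:M /\ forall g h, H g -> H h -> rho (mul g h) = rho g *m rho h.

Definition smooth_on (V : Type) (H : set T) (rho : T -> V) : Prop :=
  exists U : set T, [/\ open U, U one & forall h, H h -> U h -> rho h = rho one].

Definition irreducible_on (k : fieldType) (n : nat) (H : set T)
  (rho : T -> 'M[k]_n) : Prop :=
  (0 < n)%N /\
  forall U : 'M[k]_n, (forall h, H h -> stablemx U (rho h)) ->
     (U == (0 : 'M[k]_n))%MS \/ row_full U.

(* smooth A^x-valued character of T trivial on H, i.e. of T/H *)
Definition is_character_mod (A : comUnitRingType) (H : set T) (chi : T -> A) : Prop :=
  [/\ chi one = 1,
      forall g h, chi (mul g h) = chi g * chi h,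
      forall g, chi g \is a GRing.unit,
      forall h, H h -> chi h = 1 &
      smooth_on setT chi].

End TopGroups.

Definition is_ideal (A : comPzRingType) (I : set A) : Prop :=
  [/\ I 0, forall x y, I x -> I y -> I (x + y) & forall a x, I x -> I (a * x)].

Definition finite_length (A : comPzRingType) : Prop :=
  exists (r : nat) (I : nat -> set A),
    [/\ I 0%N = setT, I r = [set 0],
        forall i, (i <= r)%N -> is_ideal (I i) &
        forall i, (i < r)%N ->
          [/\ I i.+1 `<=` I i, I i.+1 != I i &
              forall J, is_ideal J -> I i.+1 `<=` J -> J `<=` I i ->
                J = I i.+1 \/ J = I i]].

Definition is_algebraic_closure_of_Fp (k : closedFieldType) (l : nat) : Prop :=
  [/\ prime l, (l \in [pchar k])%N &
      forall x : k, exists p : {poly k},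
        [/\ p != 0, forall i, exists m : nat, p`_i = m%:R & root p x]].

(* A is local with residue map pi : A -> k (kernel = non-units = maximal ideal) *)
Definition local_with_residue (A : comUnitRingType) (k : fieldType)
  (pi : {rmorphism A -> k}) : Prop :=
  (forall y : k, exists a : A, pi a = y) /\
  forall a : A, (a \is a GRing.unit) = (pi a != 0).

(* Main.v *)
Require Import Defs.
From HB Require Import structures.
From mathcomp Require Import all_boot all_order all_algebra.
From mathcomp Require Import all_classical all_reals all_analysis.
From mathcomp Require Import ring.
Import Order.TTheory GRing.Theory Num.Theory.
Local Open Scope classical_set_scope.
Local Open Scope ring_scope.

Definition mxin {A : comPzRingType} {n} (I : set A) (Z : 'M[A]_n) := forall p q, I (Z p q).

Section MxIn.
Variables (A : comPzRingType) (n : nat) (I : set A).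
Hypothesis hI : is_ideal I.

Lemma ideal_opp x : I x -> I (- x).
Proof. by case: hI => _ _ hm Hx; rewrite -mulN1r; apply: hm. Qed.

Lemma ideal_sum (r : seq 'I_n) (F : 'I_n -> A) :
  (forall j, I (F j)) -> I (\sum_(j <- r) F j).
Proof.
case: hI => h0 hD _ HF; elim/big_ind: _ => //.
Qed.

Lemma mxinD (Z1 Z2 : 'M[A]_n) : mxin I Z1 -> mxin I Z2 -> mxin I (Z1 + Z2).
Proof. by case: hI => _ hD _ H1 H2 p q; rewrite mxE; apply: hD. Qed.

Lemma mxinN (Z : 'M[A]_n) : mxin I Z -> mxin I (- Z).
Proof. by move=> H p q; rewrite mxE; apply: ideal_opp. Qed.

Lemma mxinMl (Z s : 'M[A]_n) : mxin I Z -> mxin I (Z *m s).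
Proof.
case: hI => _ _ hm H p q; rewrite mxE; apply: ideal_sum => j.
by rewrite mulrC; apply: hm.
Qed.

Lemma mxinMr (Z s : 'M[A]_n) : mxin I Z -> mxin I (s *m Z).
Proof.
case: hI => _ _ hm H p q; rewrite mxE; apply: ideal_sum => j.
by apply: hm.
Qed.
End MxIn.
Arguments ideal_opp {A I}.
Arguments ideal_sum {A n I}.
Arguments mxinD {A n I}.
Arguments mxinN {A n I}.
Arguments mxinMl {A n I}.
Arguments mxinMr {A n I}.

Lemma map_mx_entry (R S : pzSemiRingType) m (f : R -> S) (B : 'M[R]_m) p q :
  map_mx f B p q = f (B p q).
Proof. by rewrite mxE. Qed.

Lemma zmod_sw (V : zmodType) (a b c d : V) : a + b = c + d -> b - d = c - a.
Proof. by move=> h; rewrite -[b](addKr a) h addrA addrK addrC. Qed.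

Lemma lift_scalar (A : comUnitRingType) (k : fieldType) (pi : {rmorphism A -> k})
  (n : nat) (S : set 'M[A]_n) :
  local_with_residue pi -> finite_length A ->
  (forall C : 'M[k]_n, (forall s, S s -> C *m map_mx pi s = map_mx pi s *m C) ->
      exists lam, C = lam%:M) ->
  forall M, (forall s, S s -> M *m s = s *m M) -> exists a, M = a%:M.
Proof.
move=> [pisurj piunit] [r [I [I0 Ir Iid Istep]]] schur M cM.
suff : forall i, (i <= r)%N -> exists a, mxin (I i) (M - a%:M).
  move=> /(_ r (leqnn r)) [a Ha]; exists a; apply/matrixP => p q.
  by move: (Ha p q); rewrite Ir /= => /eqP; rewrite !mxE subr_eq0 => /eqP.
elim=> [_|i IH lt_ir].
  by exists 0; move=> p q; rewrite I0.
have [a Ha] := IH (ltnW lt_ir).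
have Ii := Iid i (ltnW lt_ir); have Ii1 := Iid i.+1 lt_ir.
have [sub neq simp] := Istep i lt_ir.
have [x [Ix nIx]] : exists x, I i x /\ ~ I i.+1 x.
  apply/not_existsP => H; move/eqP: neq; apply; apply/seteqP; split => // y Iy.
  by apply: contrapT => nI; apply: (H y).
have Jw : forall w, I i w ->
     ([set y | exists b, I i.+1 (y - b * w)] = I i.+1 \/
      [set y | exists b, I i.+1 (y - b * w)] = I i).
  move=> w Iw; case: Ii1 => h0 hD hm; case: Ii => h0' hD' hm'.
  have sJ : I i.+1 `<=` [set y | exists b, I i.+1 (y - b * w)].
    by move=> y Iy; exists 0; rewrite mul0r subr0.
  apply: simp => //.
  - split.
    + by exists 0; rewrite mul0r subr0.
    + move=> y y' [b Hb] [b' Hb']; exists (b + b').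
      have -> : y + y' - (b + b') * w = (y - b * w) + (y' - b' * w) by ring.
      exact: hD.
    + move=> c y [b Hb]; exists (c * b).
      have -> : c * y - c * b * w = c * (y - b * w) by ring.
      exact: hm.
  - move=> y [b Hb].
    have -> : y = (y - b * w) + b * w by ring.
    by apply: hD'; [apply: sub | apply: hm'].
have K : forall d, I i.+1 (d * x) -> pi d = 0.
  move=> d Hd; apply/eqP; apply: contrapT => /negP nd.
  have ud : d \is a GRing.unit by rewrite piunit.
  apply: nIx; rewrite -(mulKr ud x); case: Ii1 => _ _ hm; exact: hm.
have G : forall y, I i y -> exists b, I i.+1 (y - b * x).
  move=> y Iy.
  have [E|E] := Jw x Ix.
  - exfalso; apply: nIx; rewrite -E; exists 1; rewrite mul1r subrr.
    by case: Ii1.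
  - by rewrite -E in Iy.
have H : forall c, pi c = 0 -> I i.+1 (c * x).
  move=> c pc.
  have Icx : I i (c * x) by case: Ii => _ _ hm; apply: hm.
  have [E|E] := Jw _ Icx.
  - by rewrite -E; exists 1; rewrite mul1r subrr; case: Ii1.
  - exfalso; apply: nIx; move: Ix; rewrite -E => -[b Hb].
    have u : (1 - b * c) \is a GRing.unit.
      by rewrite piunit rmorphB rmorph1 rmorphM pc mulr0 subr0 oner_neq0.
    rewrite -(mulKr u x); case: Ii1 => _ _ hm; apply: hm.
    by have -> : (1 - b * c) * x = x - b * (c * x) by ring.
pose N := M - a%:M.
have cN : forall s, S s -> N *m s = s *m N.
  by move=> s Ss; rewrite /N mulmxBl mulmxBr cM // scalar_mxC.
have /choice [f Hf] : forall pq : 'I_n * 'I_n, exists b, I i.+1 (N pq.1 pq.2 - b * x).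
  by move=> [p q]; apply: G; apply: Ha.
pose C := \matrix_(p, q) f (p, q).
pose Z := N - x *: C.
have HZ : mxin (I i.+1) Z.
  by move=> p q; have := Hf (p, q); rewrite /Z !mxE /= mulrC.
have NZ : N = Z + x *: C by rewrite /Z subrK.
have cC : forall s, S s -> map_mx pi C *m map_mx pi s = map_mx pi s *m map_mx pi C.
  move=> s Ss; apply/eqP; rewrite -subr_eq0 -!map_mxM -map_mxB; apply/eqP.
  apply/matrixP => p q; rewrite mxE [RHS]mxE; apply: K.
  have E : x *: (C *m s - s *m C) = s *m Z - Z *m s.
    have := cN s Ss; rewrite NZ mulmxDl mulmxDr -scalemxAl -scalemxAr => E.
    by rewrite scalerBr; apply: zmod_sw.
  have : mxin (I i.+1) (x *: (C *m s - s *m C)).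
    rewrite E. apply: (mxinD Ii1); first exact: (mxinMr Ii1).
    by apply: (mxinN Ii1); apply: (mxinMl Ii1).
  by move=> /(_ p q); rewrite mxE mulrC.
have [lam Hlam] := schur _ cC.
have [c0 Hc0] := pisurj lam.
exists (a + x * c0).
have -> : M - (a + x * c0)%:M = Z + x *: (C - c0%:M).
  by rewrite scalerBr scale_scalar_mx addrA -NZ /N raddfD opprD addrA.
apply: (mxinD Ii1) => // p q.
have : map_mx pi (C - c0%:M) p q = 0 by rewrite map_mxB Hlam map_scalar_mx Hc0 subrr mxE.
move=> E0.
have e : (x *: (C - c0%:M)) p q = x * (C - c0%:M) p q by rewrite mxE.
have e2 : pi ((C - c0%:M) p q) = 0 by rewrite -E0 map_mx_entry.
by rewrite e mulrC; apply: H.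
Qed.
Lemma schur_closed (T : topologicalType) (one : T) (k : closedFieldType) (n : nat)
  (H : set T) (rho : T -> 'M[k]_n) :
  irreducible_on H rho ->
  forall C : 'M[k]_n, (forall h, H h -> C *m rho h = rho h *m C) ->
  exists lam, C = lam%:M.
Proof.
move=> [n0 irr] C cC.
have [lam] : exists lam, root (char_poly C) lam.
  by apply/closed_rootP; rewrite size_char_poly; case: n n0 {irr rho C cC}.
rewrite -eigenvalue_root_char => ev; exists lam.
have st : forall h, H h -> stablemx (eigenspace C lam) (rho h).
  move=> h Hh; apply/sub_kermxP.
  have cm : rho h *m (C - lam%:M) = (C - lam%:M) *m rho h.
    by rewrite mulmxBr mulmxBl -cC // scalar_mxC.
  have /sub_kermxP E : (eigenspace C lam <= kermx (C - lam%:M))%MS by [].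
  by rewrite -mulmxA cm mulmxA E mul0mx.
case: (irr _ st) => [/eqmx0P E | rf].
  by move: ev; rewrite /eigenvalue E eqxx.
have : (1%:M <= eigenspace C lam)%MS by rewrite sub1mx.
move/sub_kermxP; rewrite mul1mx => /eqP; rewrite subr_eq0 => /eqP //.
Qed.

Lemma scalar_inj (A : pzRingType) n (a b : A) : (0 < n)%N -> (a%:M : 'M[A]_n) = b%:M -> a = b.
Proof.
move=> n0 /matrixP /(_ (Ordinal n0) (Ordinal n0)); by rewrite !mxE eqxx !mulr1n.
Qed.

Theorem mainTheorem8
  (J : topologicalType) (mul : J -> J -> J) (inv : J -> J) (one : J)
  (J1 : set J)
  (l : nat) (k : closedFieldType) (A : comUnitRingType) (pi : {rmorphism A -> k})
  (n : nat) (eta Lam Lam' : J -> 'M[A]_n) :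
  locally_profinite_group mul inv one ->
  is_normal_subgroup mul inv one J1 -> compact J1 ->
  is_algebraic_closure_of_Fp k l ->
  local_with_residue pi -> finite_length A ->
  is_rep_on mul one J1 eta -> smooth_on one J1 eta ->
  irreducible_on J1 (fun h => map_mx pi (eta h)) ->
  is_rep_on mul one setT Lam -> smooth_on one setT Lam ->
  (forall h, J1 h -> Lam h = eta h) ->
  is_rep_on mul one setT Lam' -> smooth_on one setT Lam' ->
  (forall h, J1 h -> Lam' h = eta h) ->
  exists chi : J -> A,
    is_character_mod mul one J1 chi /\
    exists P : 'M[A]_n, P \in unitmx /\
      forall g, Lam' g *m P = P *m (chi g *: Lam g).
Proof.
move=> [[assoc unitl invl] _ _ _ _] [_ J1norm] _ _ loc fl _ _ irr
  [L1 LM] [U1 [oU1 U1one HU1]] LJ1 [L'1 L'M] [U2 [oU2 U2one HU2]] L'J1.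
have n0 := irr.1.
have LiR : forall g, Lam g *m Lam (inv g) = 1%:M.
  by move=> g; rewrite -LM // (invl g).2.
have LiL : forall g, Lam (inv g) *m Lam g = 1%:M.
  by move=> g; rewrite -LM // (invl g).1.
have L'iR : forall g, Lam' g *m Lam' (inv g) = 1%:M.
  by move=> g; rewrite -L'M // (invl g).2.
have L'iL : forall g, Lam' (inv g) *m Lam' g = 1%:M.
  by move=> g; rewrite -L'M // (invl g).1.
have comm : forall g h, J1 h ->
    (Lam (inv g) *m Lam' g) *m eta h = eta h *m (Lam (inv g) *m Lam' g).
  move=> g h Jh.
  have Jx := J1norm g h Jh.
  have E : Lam g *m eta h *m Lam (inv g) = Lam' g *m eta h *m Lam' (inv g).
    have E1 : eta (mul (mul g h) (inv g)) = Lam g *m eta h *m Lam (inv g).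
      by rewrite -(LJ1 _ Jx) -(LJ1 h Jh) !LM.
    have E2 : eta (mul (mul g h) (inv g)) = Lam' g *m eta h *m Lam' (inv g).
      by rewrite -(L'J1 _ Jx) -(L'J1 h Jh) !L'M.
    by rewrite -E1 -E2.
  have := congr1 (fun X => Lam (inv g) *m X *m Lam' g) E => /=.
  rewrite !mulmxA LiL mul1mx -!mulmxA L'iL mulmx1 => ->.
  by rewrite !mulmxA.
have scal : forall g, exists a, Lam (inv g) *m Lam' g = a%:M.
  move=> g.
  apply: (@lift_scalar A k pi n [set s | exists h, J1 h /\ s = eta h] loc fl).
    move=> C HC; apply: (@schur_closed J one k n J1 _ irr) => h Jh.
    by apply: HC; exists h.
  by move=> s [h [Jh ->]]; apply: comm.
have /choice [chi Hchi] := scal.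
have rel : forall g, Lam' g = chi g *: Lam g.
  move=> g; rewrite -[Lam' g]mul1mx -(LiR g) -mulmxA Hchi.
  by rewrite mul_mx_scalar.
have canc : forall g c d, c *: Lam g = d *: Lam g -> c = d.
  move=> g c d E; apply: (@scalar_inj A n c d n0).
  have := congr1 (fun X => X *m Lam (inv g)) E => /=.
  by rewrite -!scalemxAl LiR !scalemx1.
have chi1 : chi one = 1.
  by apply: (canc one); rewrite -rel L1 L'1 scale1r.
have chiM : forall g h, chi (mul g h) = chi g * chi h.
  move=> g h; apply: (canc (mul g h)); rewrite -rel L'M // LM // !rel.
  by rewrite -scalemxAl -scalemxAr scalerA.
exists chi; split; last first.
  exists 1%:M; split; first exact: unitmx1.
  by move=> g; rewrite mulmx1 mul1mx rel.
split => //.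
- move=> g; apply/unitrPr; exists (chi (inv g)).
  by rewrite -chiM (invl g).2.
- by move=> h Jh; apply: (canc h); rewrite -rel L'J1 // -LJ1 // scale1r.
- rewrite /smooth_on; exists (U1 `&` U2); split.
  + exact: openI.
  + by split.
  + move=> h _ [Uh1 Uh2]; rewrite chi1; apply: (canc h).
    by rewrite -rel HU1 // HU2 // L1 L'1 scale1r.
Qed.
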